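(* Let $\kappa\ge2$, $n\ge1$ be integers and $0<\epsilon<1$. Let $\check q$ be given by $\check q_i=0$ for $0\le i<2^{\kappa-1}$ and $\check q_i=2^{1-\kappa}$ for $2^{\kappa-1}\le i\le2^\kappa-1$. Let $\mathcal{C}_\rho$ be the set of $q\in\mathbb{R}^{2^\kappa}$ with $q_0=0$, $q_i\ge0$ for all $i$, $\sum_iq_i=1$, and $\sum_{i=1}^{2^\kappa-1}\big(q_i-\tfrac{1}{2^\kappa-1}\big)^2=\frac{2^{\kappa-1}-1}{(2^\kappa-2^{\kappa-1})(2^\kappa-1)}.$ Then $\check q\in\mathcal{C}_\rho$ and $\lambda(n,\epsilon,\check q)\le\lambda(n,\epsilon,q)$ for all $q\in\mathcal{C}_\rho$.
   Context: $W=\mathbb{F}_2^\kappa$; $\nu(i)\in W$ is the binary expansion of $i\in\{0,\dots,2^\kappa-1\}$; vectors $q$ are indexed $q_0,\dots,q_{2^\kappa-1}$. For a subspace $S\subseteq W$, $\zeta(S,q)=\sum_{i:\nu(i)\in S}q_i$; $\Xi(W,\kappa-1)$ is the set of $(\kappa-1)$-dimensional subspaces of $W$. For real $q$ define $\lambda(n,\epsilon,q)=(2-\epsilon)^n2^{-\kappa}\Big(1+\sum_{S\in\Xi(W,\kappa-1)}\big(\tfrac{\epsilon}{2-\epsilon}\big)^{n(1-\zeta(S,q))}\Big)-1$ (the $\chi^2$ divergence between $p_{MZ}$ and $p_Mp_Z$ for the coset code over a binary erasure channel with erasure probability $\epsilon$, when $q$ is a generator matrix's column-distribution vector). The vector $\check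 q$ (the first subspace exclusion code) puts equal weight on all vectors outside the $(\kappa-1)$-dimensional subspace $\{\nu(i):i<2^{\kappa-1}\}$. *)

(* Defs.v *)
From HB Require Import structures.
From mathcomp Require Import all_boot all_order all_algebra.
From mathcomp Require Import reals exp.
Set Implicit Arguments. Unset Strict Implicit. Unset Printing Implicit Defensive.
Import Order.TTheory GRing.Theory Num.Theory.
Local Open Scope ring_scope.

Definition W (k : nat) := 'rV['F_2]_k.

Definition nu (k : nat) (i : nat) : W k := \row_(j < k) ((odd (i %/ 2 ^ j))%:R : 'F_2).

(* Subspaces of W are represented canonically by square matrices A with
   <<A>> = A (their row space); Xi(W, k-1) = those of rank (dimension) k-1. *)
Definition Xi (k : nat) : {set 'M['F_2]_k} :=
  [set A : 'M['F_2]_k | (<<A>>%MS == A) && (\rank A == k.-1)].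

Definition zeta (R : realType) (k : nat) (S : 'M['F_2]_k) (q : 'I_(2 ^ k) -> R) : R :=
  \sum_(i < 2 ^ k | (nu k i <= S)%MS) q i.

Definition lambda (R : realType) (k n : nat) (eps : R) (q : 'I_(2 ^ k) -> R) : R :=
  (2 - eps) ^+ n * (2 ^- k)
  * (1 + \sum_(S in Xi k) powR (eps / (2 - eps)) (n%:R * (1 - zeta S q))) - 1.

Definition qcheck (R : realType) (k : nat) : 'I_(2 ^ k) -> R :=
  fun i => if (i < 2 ^ k.-1)%N then 0 else ((2 ^ k.-1)%:R)^-1.

Definition C_rho (R : realType) (k : nat) (q : 'I_(2 ^ k) -> R) : Prop :=
  [/\ (forall i : 'I_(2 ^ k), (i : nat) = 0%N -> q i = 0),
      (forall i : 'I_(2 ^ k), 0 <= q i),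
      \sum_(i < 2 ^ k) q i = 1 &
      \sum_(i < 2 ^ k | (i : nat) != 0%N) (q i - ((2 ^ k)%:R - 1)^-1) ^+ 2
        = ((2 ^ k.-1)%:R - 1) / (((2 ^ k)%:R - (2 ^ k.-1)%:R) * ((2 ^ k)%:R - 1))].

(* Main.v *)
Require Import Defs.
From HB Require Import structures.
From mathcomp Require Import all_boot all_order all_algebra.
From mathcomp Require Import reals exp.
From mathcomp Require Import sequences derive normedtype topology boolp.
From mathcomp Require Import mxabelem.
From mathcomp Require Import ring lra.
Set Implicit Arguments. Unset Strict Implicit. Unset Printing Implicit Defensive.
Import Order.TTheory GRing.Theory Num.Theory.
Import numFieldNormedType.Exports.
Local Open Scope ring_scope.

Section Analytic.
Variable R : realType.

Definition psi (K x : R) := expR x - 1 - x - K * x ^+ 2.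
Definition psi1 (K x : R) := expR x - 1 - 2 * K * x.
Definition psi2 (K x : R) := expR x - 2 * K.

Lemma d_psi (K x : R) : is_derive x 1 (psi K) (psi1 K x).
Proof.
rewrite /psi /psi1.
eapply is_derive_eq. typeclasses eauto.
rewrite /= ?scaler1 ?mulr1 ?mul1r ?subr0.
rewrite /GRing.scale /=; ring.
Qed.

Lemma d_psi1 (K x : R) : is_derive x 1 (psi1 K) (psi2 K x).
Proof.
rewrite /psi1 /psi2.
eapply is_derive_eq. typeclasses eauto.
rewrite /= ?scaler1 ?mulr1 ?mul1r ?subr0.
rewrite /GRing.scale /=; ring.
Qed.

Lemma mvt_all (f df : R -> R) (a b : R) : a <= b ->
  (forall x : R, is_derive x (1:R) f (df x)) ->
  exists2 c, a <= c <= b & f b - f a = df c * (b - a).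
Proof.
move=> ab hd.
have [c cab ->] := @MVT_segment R f df a b ab (fun (x : R) _ => hd x)
  (derivable_within_continuous (fun (x : R) _ => @ex_derive _ _ _ _ _ _ _ (hd x))).
by exists c => //; move: cab; rewrite in_itv.
Qed.
Arguments mvt_all {f df a b}.

Lemma mvt_lt (f df : R -> R) (a b : R) : a < b ->
  (forall x : R, is_derive x (1:R) f (df x)) ->
  exists2 c, a < c < b & f b - f a = df c * (b - a).
Proof.
move=> ab hd.
have [c cab ->] := @MVT R f df a b ab (fun (x : R) _ => hd x)
  (derivable_within_continuous (fun (x : R) _ => @ex_derive _ _ _ _ _ _ _ (hd x))).
by exists c => //; move: cab; rewrite in_itv.
Qed.
Arguments mvt_lt {f df a b}.

Lemma psi_ge0 (K T x : R) : 0 < T -> psi K (- T) = 0 -> - T <= x -> 0 <= psi K x.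
Proof.
move=> T0 hT xT.
have p0 : psi K 0 = 0 by rewrite /psi expR0; ring.
have p10 : psi1 K 0 = 0 by rewrite /psi1 expR0; ring.
have nT : -T < 0 by rewrite oppr_lt0.
have [c /andP[c1 c2] hc] := mvt_lt nT (d_psi K).
have c0 : psi1 K c = 0.
  move: hc; rewrite p0 hT subrr sub0r opprK => /esym/eqP.
  by rewrite mulf_eq0 (gt_eqF T0) orbF => /eqP.
have [d /andP[d1 d2] hd] := mvt_lt c2 (d_psi1 K).
have d0 : psi2 K d = 0.
  move: hd; rewrite p10 c0 subrr => /esym/eqP.
  by rewrite mulf_eq0 sub0r oppr_eq0 (lt_eqF c2) orbF => /eqP.
have eK : 2 * K = expR d by move: d0; rewrite /psi2 => /eqP; rewrite subr_eq0 => /eqP.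
have s2 y : d <= y -> 0 <= psi2 K y by move=> dy; rewrite /psi2 eK subr_ge0 ler_expR.
have s2' y : y <= d -> psi2 K y <= 0 by move=> dy; rewrite /psi2 eK subr_le0 ler_expR.
have mono1 y z : d <= y -> y <= z -> psi1 K y <= psi1 K z.
  move=> dy yz; have [w /andP[w1 w2] hw] := mvt_all yz (d_psi1 K).
  rewrite -subr_ge0 hw; apply: mulr_ge0; [apply: s2; exact: le_trans w1|by rewrite subr_ge0].
have mono2 y z : y <= z -> z <= d -> psi1 K z <= psi1 K y.
  move=> yz zd; have [w /andP[w1 w2] hw] := mvt_all yz (d_psi1 K).
  rewrite -subr_le0 hw; apply: mulr_le0_ge0; [apply: s2'; exact: le_trans zd|by rewrite subr_ge0].
have A y : d <= y -> 0 <= psi K y.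
  move=> dy; have [y0|y0] := leP 0 y.
    have [w /andP[w1 w2] hw] := mvt_all y0 (d_psi K).
    have : 0 <= psi1 K w by rewrite -p10; apply: mono1 => //; exact: ltW.
    by move: hw; rewrite p0 subr0 => -> /mulr_ge0; apply; rewrite subr0.
  have [w /andP[w1 w2] hw] := mvt_all (ltW y0) (d_psi K).
  have : psi1 K w <= 0 by rewrite -p10; apply: mono1 => //; exact: le_trans w1.
  move: hw; rewrite p0 => hw hw'.
  have : psi1 K w * (0 - y) <= 0 by rewrite mulr_le0_ge0 // subr_ge0 ltW.
  by rewrite -hw; lra.
have [dx|xd] := leP d x; first exact: A.
have [w1 /andP[w11 w12] hw1] := mvt_all xT (d_psi K).
have [w2 /andP[w21 w22] hw2] := mvt_all (ltW xd) (d_psi K).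
have m12 : psi1 K w2 <= psi1 K w1 by apply: mono2 => //; exact: le_trans w12 w21.
have Ad := A d (lexx d).
move: hw1; rewrite hT subr0 => hw1.
have [p1|p1] := leP 0 (psi1 K w1).
  by rewrite hw1 mulr_ge0 // subr_ge0.
have : psi1 K w2 * (d - x) <= 0 by rewrite mulr_le0_ge0 ?subr_ge0 ?ltW //; lra.
lra.
Qed.


Lemma sumQ (I : finType) (A : {set I}) (a b g : R) (z : I -> R) :
  \sum_(c in A) (a + b * z c + g * z c ^+ 2)
  = a *+ #|A| + b * \sum_(c in A) z c + g * \sum_(c in A) z c ^+ 2.
Proof. by rewrite !big_split /= sumr_const !mulr_sumr. Qed.

Lemma key_ineq (I : finType) (A : {set I}) (r : R) (n : nat) (z z' : I -> R) :
  0 < r -> r < 1 -> (0 < n)%N ->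
  (forall c, 0 <= z c) -> (forall c, c \in A -> z' c = 0 \/ z' c = 2^-1) ->
  \sum_(c in A) z c = \sum_(c in A) z' c ->
  \sum_(c in A) z c ^+ 2 = \sum_(c in A) z' c ^+ 2 ->
  \sum_(c in A) powR r (n%:R * (1 - z' c)) <= \sum_(c in A) powR r (n%:R * (1 - z c)).
Proof.
move=> r0 r1 n0 z0 z'v s1 s2.
have lr : ln r < 0 by apply: ln_lt0; rewrite r0 r1.
have n0' : 0 < n%:R :> R by rewrite ltr0n.
set L := - (n%:R * ln r).
have L0 : 0 < L by rewrite /L oppr_gt0 pmulr_rlt0.
set T := L / 2.
have T0 : 0 < T by rewrite /T divr_gt0.
set K := (expR (-T) - 1 + T) / T ^+ 2.
have hK : psi K (-T) = 0.
  rewrite /psi /K; field; exact: lt0r_neq0.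
set e := expR (-T).
pose Q (y : R) := e * (1 - T + K * T ^+ 2) + e * (L - 2 * K * L * T) * y + e * K * L ^+ 2 * y ^+ 2.
have G y : powR r (n%:R * (1 - y)) = Q y + e * psi K (L * y - T).
  rewrite /powR (gt_eqF r0) /Q /psi /e.
  have -> : n%:R * (1 - y) * ln r = - T + (L * y - T) by rewrite /T /L; field.
  rewrite expRD; ring.
have e0 : 0 < e by rewrite /e expR_gt0.
under eq_bigr => c _ do rewrite G.
under [X in _ <= X]eq_bigr => c _ do rewrite G.
rewrite !big_split /=.
have -> : \sum_(i in A) e * psi K (L * z' i - T) = 0.
  rewrite big1 // => c cA.
  case: (z'v c cA) => ->.
    by rewrite mulr0 sub0r hK mulr0.
  have -> : L * 2^-1 - T = 0 by rewrite /T; field.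
  by rewrite /psi expR0; ring.
have SQ (w : I -> R) : \sum_(c in A) Q (w c) = (e * (1 - T + K * T ^+ 2)) *+ #|A| + e * (L - 2 * K * L * T) * \sum_(c in A) w c + e * K * L ^+ 2 * \sum_(c in A) w c ^+ 2.
  exact: sumQ.
rewrite -!mulr_sumr s1 s2 addr0 lerDl.
apply: mulr_ge0; first exact: ltW.
apply: sumr_ge0 => c _.
apply: psi_ge0 T0 hK _.
by rewrite lerBrDr addNr mulr_ge0 // ltW.
Qed.

End Analytic.

Lemma F2_cases (a : 'F_2) : a = 0 \/ a = 1.
Proof. by case: a => [[|[|i]] Hi]; [left|right|]; try apply: val_inj. Qed.

Lemma card2 : #|'F_2| = 2%N.
Proof. by rewrite card_Fp. Qed.

Lemma card_ker k p (A : 'M['F_2]_(p, k)) :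
  #|[set x : 'rV['F_2]_k | x *m A^T == 0]| = (2 ^ (k - \rank A))%N.
Proof.
have -> : [set x : 'rV['F_2]_k | x *m A^T == 0] = rowg (kermx A^T).
  by apply/setP => x; rewrite inE mem_rowg sub_kermx.
by rewrite card_rowg card2 mxrank_ker mxrank_tr.
Qed.

Lemma rank2 k (v w : 'rV['F_2]_k) : v != 0 -> w != 0 -> v != w ->
  \rank (col_mx v w) = 2%N.
Proof.
move=> v0 w0 vw.
have := mxrank_sum_cap v w; rewrite addsmxE !rank_rV v0 w0 /=.
suff -> : \rank (v :&: w)%MS = 0%N by rewrite addn0.
apply/eqP; apply: contraNT vw; rewrite -lt0n => h.
have le1 : (\rank (v :&: w)%MS <= \rank v)%N := mxrankS (capmxSl v w).
have e : (v :&: w == v)%MS.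
  by rewrite -(mxrank_leqif_eq (capmxSl v w)) eqn_leq le1 rank_rV v0.
have /sub_rVP [a va] : (v <= w)%MS.
  by apply: submx_trans (capmxSr v w); case/andP: e.
case: (F2_cases a) => a01; move: va; rewrite a01 ?scale0r ?scale1r => va.
  by move: v0; rewrite va eqxx.
by rewrite va.
Qed.

Lemma bits_inj k i j : (i < 2 ^ k)%N -> (j < 2 ^ k)%N ->
  (forall t, (t < k)%N -> odd (i %/ 2 ^ t) = odd (j %/ 2 ^ t)) -> i = j.
Proof.
elim: k i j => [|k IH] i j.
  by rewrite expn0 !ltnS !leqn0 => /eqP -> /eqP ->.
move=> hi hj hb.
have o : odd i = odd j by have := hb 0%N isT; rewrite expn0 !divn1.
have h2 : i./2 = j./2.
  apply: IH.
  - by rewrite -divn2 ltn_divLR // -expnSr.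
  - by rewrite -divn2 ltn_divLR // -expnSr.
  move=> t tk; rewrite -!divn2 -!divnMA -expnS; exact: hb.
by rewrite -[i]odd_double_half -[j]odd_double_half o h2.
Qed.

Lemma F2_nat_inj (b c : bool) : (b%:R : 'F_2) = c%:R -> b = c.
Proof. by case: b; case: c => //= /eqP; rewrite ?oner_eq0 // eq_sym oner_eq0. Qed.

Lemma nu_inj k : injective (fun i : 'I_(2 ^ k) => nu k i).
Proof.
move=> i j /= e; apply: val_inj; apply: (bits_inj (ltn_ord i) (ltn_ord j)) => t tk.
have /rowP /(_ (Ordinal tk)) := e; rewrite !mxE /=; exact: F2_nat_inj.
Qed.

Lemma nu0 k : nu k 0 = 0.
Proof. by apply/rowP => j; rewrite !mxE div0n. Qed.

Lemma nu_last m (i : 'I_(2 ^ m.+1)) : nu m.+1 i 0 ord_max = ((2 ^ m <= i)%N)%:R.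
Proof.
rewrite mxE /=; congr (_%:R).
have hi : (i < 2 ^ m + 2 ^ m)%N by rewrite addnn -mul2n -expnS.
case: (leqP (2 ^ m) i) => h.
  have -> : (i : nat) = (1 * 2 ^ m + (i - 2 ^ m))%N by rewrite mul1n subnKC.
  rewrite divnMDl ?expn_gt0 // divn_small //; by rewrite ltn_subLR.
by rewrite divn_small.
Qed.

Lemma card_W k : #|{: 'rV['F_2]_k}| = (2 ^ k)%N.
Proof. by rewrite card_mx card2 mul1n. Qed.

Lemma nu_card k (P : pred 'rV['F_2]_k) :
  #|[set i : 'I_(2 ^ k) | P (nu k i)]| = #|[set x | P x]|.
Proof.
have onto : forall x : 'rV['F_2]_k, x \in codom (fun i : 'I_(2 ^ k) => nu k i).
  by apply: inj_card_onto (@nu_inj k) _; rewrite card_W card_ord.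
have -> : [set x | P x] = (fun i : 'I_(2 ^ k) => nu k i) @: [set i : 'I_(2 ^ k) | P (nu k i)].
  apply/setP => x; rewrite inE; apply/idP/imsetP.
    move=> Px; have /codomP [i ei] := onto x; exists i => //; by rewrite inE -ei.
  by case=> i; rewrite inE => Pi ->.
by rewrite card_imset //; exact: nu_inj.
Qed.

Definition Hc k (c : 'rV['F_2]_k) : 'M['F_2]_k := <<kermx c^T>>%MS.

Lemma memHc k (c u : 'rV['F_2]_k) : (u <= Hc c)%MS = (u *m c^T == 0).
Proof. by rewrite genmxE sub_kermx. Qed.

Lemma mx11_eq0 (A : 'M['F_2]_1) : (A == 0) = (A 0 0 == 0).
Proof.
apply/eqP/eqP => [->|h]; first by rewrite mxE.
by apply/matrixP => i j; rewrite !ord1 h mxE.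
Qed.

Lemma Xi_eq k : (0 < k)%N -> Xi k = (@Hc k) @: [set c : 'rV['F_2]_k | c != 0].
Proof.
move=> k0; apply/setP => S; rewrite inE; apply/andP/imsetP.
  case => /eqP gS /eqP rS.
  set c := nz_row (kermx S^T).
  exists c.
    rewrite inE nz_row_eq0 -mxrank_eq0 mxrank_ker mxrank_tr rS.
    by rewrite -{1}(prednK k0) subSnn.
  have h : (S <= kermx c^T)%MS.
    rewrite sub_kermx -trmx_eq0 trmx_mul trmxK -sub_kermx; exact: nz_row_sub.
  rewrite /Hc -{1}gS; apply: eq_genmx; apply/eqmxP.
  rewrite -(mxrank_leqif_eq h) mxrank_ker mxrank_tr rank_rV rS.
  have -> : c != 0 by rewrite nz_row_eq0 -mxrank_eq0 mxrank_ker mxrank_tr rS -{1}(prednK k0) subSnn.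
  by rewrite subn1.
case => c; rewrite inE => c0 ->.
by rewrite /Hc genmx_id eqxx genmxE mxrank_ker mxrank_tr rank_rV c0 subn1.
Qed.

Lemma Hc_inj k : {in [set c : 'rV['F_2]_k | c != 0] &, injective (@Hc k)}.
Proof.
move=> c d _ _ e; apply/rowP => j.
have := memHc c (delta_mx 0 j); rewrite e memHc -!rowE !mx11_eq0 !mxE.
case: (F2_cases (c 0 j)) => ->; case: (F2_cases (d 0 j)) => -> //=;
  by rewrite eqxx ?oner_eq0.
Qed.

Section Sums.
Variable R : realType.

Lemma filt k (F : 'I_(2 ^ k) -> R) : (forall i : 'I_(2 ^ k), (i : nat) = 0%N -> F i = 0) ->
  \sum_(i < 2 ^ k | (i : nat) != 0%N) F i = \sum_(i < 2 ^ k) F i.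
Proof.
move=> hF; rewrite [RHS](bigID (fun i : 'I_(2 ^ k) => (i : nat) != 0%N)) /=.
by rewrite [X in _ + X]big1 ?addr0 // => i /negbNE/eqP; exact: hF.
Qed.

Definition S2 k : R :=
  ((2 ^ k.-1)%:R - 1) / (((2 ^ k)%:R - (2 ^ k.-1)%:R) * ((2 ^ k)%:R - 1))
  + 2 * ((2 ^ k)%:R - 1)^-1
  - \sum_(i < 2 ^ k | (i : nat) != 0%N) (((2 ^ k)%:R - 1)^-1) ^+ 2.

Lemma Crho_sums k (q : 'I_(2 ^ k) -> R) : C_rho q ->
  \sum_i q i = 1 /\ \sum_i q i ^+ 2 = S2 k.
Proof.
case=> q0 qge s1 s4; split => //.
set d := (((2 ^ k)%:R - 1 : R)^-1) in s4 *.
have e : \sum_(i < 2 ^ k | (i : nat) != 0%N) (q i - d) ^+ 2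
   = \sum_(i < 2 ^ k | (i : nat) != 0%N) q i ^+ 2
     - 2 * d * \sum_(i < 2 ^ k | (i : nat) != 0%N) q i
     + \sum_(i < 2 ^ k | (i : nat) != 0%N) d ^+ 2.
  rewrite mulr_sumr -sumrB -big_split; apply: eq_bigr => i _ /=; ring.
rewrite (@filt k (fun i => q i ^+ 2)) in e; last by move=> i /q0 ->; rewrite expr2 mul0r.
rewrite (@filt k q) in e; last by move=> i /q0.
rewrite /S2 -/d -s4 e s1; ring.
Qed.


Lemma sum_cond_const (I : finType) (P : pred I) (x : R) :
  \sum_(i | P i) x = x *+ #|[set i | P i]|.
Proof. by rewrite -sumr_const; apply: eq_bigl => i; rewrite inE. Qed.

Lemma card_nzker k p (A : 'M['F_2]_(p, k)) :
  #|[set c : 'rV['F_2]_k | (c != 0) && (c *m A^T == 0)]| = (2 ^ (k - \rank A)).-1.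
Proof.
rewrite -(card_ker A) [in RHS](cardsD1 0) inE mul0mx eqxx /=.
by apply: eq_card => c; rewrite !inE andbC.
Qed.

Lemma tr_eq k (v c : 'rV['F_2]_k) : (v *m c^T == 0) = (c *m v^T == 0).
Proof. by rewrite -trmx_eq0 trmx_mul trmxK. Qed.

Lemma nu_neq0 k (i : 'I_(2 ^ k)) : (i : nat) != 0%N -> nu k i != 0.
Proof.
apply: contra => /eqP h; apply/eqP.
have k0 : (0 < 2 ^ k)%N by rewrite expn_gt0.
apply: (bits_inj (ltn_ord i) k0) => t tk.
have := congr1 (fun M : 'rV['F_2]_k => M 0 (Ordinal tk)) h.
rewrite !mxE div0n /=; by move=> H; apply: (@F2_nat_inj _ false).
Qed.

Definition zc k (q : 'I_(2 ^ k) -> R) (c : 'rV['F_2]_k) :=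
  \sum_(i < 2 ^ k | nu k i *m c^T == 0) q i.

Lemma zeta_Hc k (q : 'I_(2 ^ k) -> R) c : zeta (Hc c) q = zc q c.
Proof. by apply: eq_bigl => i; rewrite memHc. Qed.

Lemma cnt1 k (i : 'I_(2 ^ k)) : (i : nat) != 0%N ->
  #|[set c : 'rV['F_2]_k | (c != 0) && (nu k i *m c^T == 0)]| = (2 ^ (k - 1)).-1.
Proof.
move=> i0; have r1 : \rank (nu k i) = 1%N by rewrite rank_rV nu_neq0.
transitivity #|[set c : 'rV['F_2]_k | (c != 0) && (c *m (nu k i)^T == 0)]|.
  by apply: eq_card => c; rewrite !inE tr_eq.
by rewrite card_nzker r1.
Qed.

Lemma cnt2 k (i j : 'I_(2 ^ k)) : (i : nat) != 0%N -> (j : nat) != 0%N -> i != j ->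
  #|[set c : 'rV['F_2]_k | (c != 0) && ((nu k i *m c^T == 0) && (nu k j *m c^T == 0))]|
  = (2 ^ (k - 2)).-1.
Proof.
move=> i0 j0 ij.
have r2 : \rank (col_mx (nu k i) (nu k j)) = 2%N.
  apply: rank2; try exact: nu_neq0.
  by apply: contra ij => /eqP /(@nu_inj k) ->.
transitivity #|[set c : 'rV['F_2]_k | (c != 0) && (c *m (col_mx (nu k i) (nu k j))^T == 0)]|.
  by apply: eq_card => c; rewrite !inE tr_col_mx mul_mx_row row_mx_eq0 (tr_eq (nu k i)) (tr_eq (nu k j)).
by rewrite card_nzker r2.
Qed.

Lemma sum_zc k (q : 'I_(2 ^ k) -> R) : (forall i : 'I_(2 ^ k), (i : nat) = 0%N -> q i = 0) ->
  \sum_(c in [set c : 'rV['F_2]_k | c != 0]) zc q c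
  = ((2 ^ (k - 1)).-1)%:R * \sum_i q i.
Proof.
move=> q0; rewrite /zc.
under eq_bigr => c _ do rewrite big_mkcond.
rewrite exchange_big /= mulr_sumr; apply: eq_bigr => i _.
rewrite -big_mkcondr sum_cond_const.
have [i0|i0] := eqVneq (i : nat) 0%N; first by rewrite q0 // mul0rn mulr0.
rewrite mulr_natl; congr (_ *+ _); rewrite -(cnt1 i0).
by apply: eq_card => c; rewrite !inE.
Qed.


Lemma cond_prod (I : finType) (S : pred I) (a b : pred I) (x y : R) :
  \sum_(c in S) (if a c then x else 0) * (if b c then y else 0)
  = (x * y) *+ #|[set c | (c \in S) && (a c && b c)]|.
Proof.
rewrite (eq_bigr (fun c => if a c && b c then x * y else 0)); last first.
  by move=> c _; case: (a c); case: (b c); rewrite ?mulr0 ?mul0r.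
by rewrite -big_mkcondr sum_cond_const.
Qed.

Lemma quad_sum (I : finType) (q : I -> R) (a b : R) :
  \sum_i \sum_j q i * q j * (if i == j then a else b)
  = (a - b) * \sum_i q i ^+ 2 + b * (\sum_i q i) ^+ 2.
Proof.
rewrite expr2 big_distrlr /= !mulr_sumr -big_split /=.
apply: eq_bigr => i _.
rewrite (bigD1 i) //= eqxx [X in _ = _ + _ * X](bigD1 i) //=.
rewrite (eq_bigr (fun j => q i * q j * b)); last first.
  by move=> j /negPf; rewrite eq_sym => ->.
rewrite -mulr_suml; ring.
Qed.

Lemma sum_zc2 k (q : 'I_(2 ^ k) -> R) : (forall i : 'I_(2 ^ k), (i : nat) = 0%N -> q i = 0) ->
  \sum_(c in [set c : 'rV['F_2]_k | c != 0]) zc q c ^+ 2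
  = (((2 ^ (k - 1)).-1)%:R - ((2 ^ (k - 2)).-1)%:R) * \sum_i q i ^+ 2
    + ((2 ^ (k - 2)).-1)%:R * (\sum_i q i) ^+ 2.
Proof.
move=> q0; rewrite -quad_sum /zc.
pose P (c : 'rV['F_2]_k) (i : 'I_(2 ^ k)) := nu k i *m c^T == 0.
have E1 c : (\sum_(i < 2 ^ k | nu k i *m c^T == 0) q i) ^+ 2
   = \sum_i \sum_j (if P c i then q i else 0) * (if P c j then q j else 0).
  by rewrite big_mkcond expr2 big_distrlr.
rewrite (eq_bigr _ (fun c _ => E1 c)) exchange_big /=.
apply: eq_bigr => i _; rewrite exchange_big /=; apply: eq_bigr => j _.
rewrite cond_prod.
have [i0|i0] := eqVneq (i : nat) 0%N; first by rewrite q0 // !mul0r mul0rn.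
have [j0|j0] := eqVneq (j : nat) 0%N; first by rewrite (q0 j) // !mulr0 !mul0r mul0rn.
rewrite -mulr_natr; congr (_ * _); case: eqVneq => [<-|ij].
  rewrite -(cnt1 i0); congr (_%:R); apply: eq_card => c; rewrite !inE andbb.
  by [].
rewrite -(cnt2 i0 j0 ij); congr (_%:R); apply: eq_card => c; rewrite !inE.
by [].
Qed.


Lemma F2_nz (b : bool) : ((b%:R : 'F_2) != 0) = b.
Proof. by case: b; rewrite ?eqxx ?oner_eq0. Qed.

Lemma last_eq0 m (x : 'rV['F_2]_m.+1) :
  (x *m (delta_mx 0 ord_max : 'rV['F_2]_m.+1)^T == 0) = (x 0 ord_max == 0).
Proof. by rewrite trmx_delta -colE mx11_eq0 mxE. Qed.

Definition lastQ m (c x : 'rV['F_2]_m.+1) := (x *m c^T == 0) && (x 0 ord_max != 0).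

Lemma zc_qcheck m (c : 'rV['F_2]_m.+1) : (0 < m)%N -> c != 0 ->
  zc (@qcheck R m.+1) c = 0 \/ zc (@qcheck R m.+1) c = 2^-1.
Proof.
move=> m0 c0; rewrite /zc.
set h := (2 ^ m)%N.
rewrite (bigID (fun i : 'I_(2 ^ m.+1) => (h <= i)%N)) /=.
rewrite [X in _ + X]big1 ?addr0; last first.
  by move=> i /andP[_]; rewrite /qcheck /= -ltnNge => ->.
rewrite (eq_bigr (fun _ => (h%:R : R)^-1)); last first.
  by move=> i /andP[_]; rewrite /qcheck /= ltnNge => ->.
rewrite sum_cond_const.
pose Q := lastQ c.
have -> : #|[set i : 'I_(2 ^ m.+1) | (nu m.+1 i *m c^T == 0) && (h <= i)%N]|
        = #|[set x | Q x]|.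
  rewrite -(nu_card Q); apply: eq_card => i; rewrite !inE /Q /lastQ nu_last F2_nz.
  by [].
pose e : 'rV['F_2]_m.+1 := delta_mx 0 ord_max.
have [ce|ce] := eqVneq c e.
  left; rewrite (_ : #|_| = 0%N) ?mulr0n //; apply/eqP; rewrite cards_eq0.
  apply/eqP/setP => x; rewrite !inE /Q /lastQ ce last_eq0.
  by case: (x 0 ord_max == 0).
right.
have card1 := card_ker c; rewrite rank_rV c0 /= subn1 /= in card1.
have card2 : #|[set x : 'rV['F_2]_m.+1 | x *m (col_mx c e)^T == 0]| = (2 ^ (m - 1))%N.
  rewrite card_ker rank2 //.
  by rewrite /e -mxrank_eq0 mxrank_delta.
have := cardsID [set x : 'rV['F_2]_m.+1 | x *m e^T == 0] [set x : 'rV['F_2]_m.+1 | x *m c^T == 0].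
rewrite card1.
have -> : [set x : 'rV['F_2]_m.+1 | x *m c^T == 0] :&: [set x | x *m e^T == 0]
        = [set x | x *m (col_mx c e)^T == 0].
  by apply/setP => x; rewrite !inE tr_col_mx mul_mx_row row_mx_eq0.
have -> : [set x : 'rV['F_2]_m.+1 | x *m c^T == 0] :\: [set x | x *m e^T == 0]
        = [set x | Q x].
  by apply/setP => x; rewrite !inE /Q /lastQ /e last_eq0 andbC.
rewrite card2 => hc.
have -> : #|[set x | Q x]| = (2 ^ (m - 1))%N.
  have hm : (2 ^ m = 2 ^ (m - 1) + 2 ^ (m - 1))%N.
    by rewrite addnn -mul2n -expnS subn1 prednK.
  by move: hc; rewrite hm => /eqP; rewrite eqn_add2l => /eqP.
have hm2 : (2 ^ m = 2 * 2 ^ (m - 1))%N by rewrite -expnS subn1 prednK.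
rewrite /h hm2 natrM invfM -[X in X = _]mulr_natr mulfVK //.
by rewrite pnatr_eq0 expn_eq0.
Qed.

End Sums.

Section Q.
Variable R : realType.

Lemma sum_ord_nat n (F : nat -> R) : \sum_(i < n) F i = \sum_(0 <= i < n) F i.
Proof. by rewrite big_mkord. Qed.

Lemma qcheck_C m : (0 < m)%N -> C_rho (@qcheck R m.+1).
Proof.
move=> m0.
set h := (2 ^ m)%N.
have hM : (2 ^ m.+1 = h + h)%N by rewrite expnS mul2n addnn.
have h1 : (1 <= h)%N by rewrite expn_gt0.
have H0 : (0 : R) < h%:R by rewrite ltr0n.
have H2 : (2 : R) <= h%:R.
  by rewrite (ler_nat R 2) /h -(expn1 2) leq_exp2l.
have eM : (2 ^ m.+1)%:R = h%:R + h%:R :> R by rewrite hM natrD.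
split.
- by move=> i hi; rewrite /qcheck hi expn_gt0.
- by move=> i; rewrite /qcheck; case: ifP => // _; rewrite invr_ge0 ler0n.
- rewrite (eq_bigr (fun i : 'I_(2 ^ m.+1) => (fun n : nat => if (n < h)%N then 0 else (h%:R)^-1 : R) i)) //.
  rewrite (sum_ord_nat _ (fun n : nat => if (n < h)%N then 0 else (h%:R)^-1 : R)) hM (big_cat_nat (n:=h) (leq0n h)) ?leq_addr //=.
  rewrite big1_seq ?add0r; last first.
    by move=> i /andP[_]; rewrite mem_index_iota => /andP[_ ->].
  rewrite (eq_big_nat _ _ (F2 := fun => (h%:R)^-1)); last first.
    by move=> i /andP[hi _]; rewrite ltnNge hi.
  by rewrite sumr_const_nat addnK -[_ *+ _]mulr_natr mulVf // gt_eqF.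
- set d := ((2 ^ m.+1)%:R - 1 : R)^-1.
  rewrite (eq_bigr (fun i : 'I_(2 ^ m.+1) => (fun n : nat => ((if (n < h)%N then 0 else (h%:R)^-1 : R) - d) ^+ 2) i)) //.
  rewrite (big_mkcond (fun i : 'I_(2 ^ m.+1) => (i : nat) != 0%N)) /=.
  rewrite (sum_ord_nat _ (fun n : nat => if n != 0%N then ((if (n < h)%N then 0 else (h%:R)^-1 : R) - d) ^+ 2 else 0)).
  rewrite hM (big_cat_nat (n:=h) (leq0n h)) ?leq_addr //=.
  rewrite (big_cat_nat (n:=1) (leq0n 1) h1) /= big_nat1 /= add0r.
  rewrite (eq_big_nat _ _ (F2 := fun => d ^+ 2)); last first.
    by move=> i /andP[i1 ih]; rewrite ih -lt0n i1 sub0r sqrrN.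
  rewrite [X in _ + X](eq_big_nat _ _ (F2 := fun => ((h%:R)^-1 - d) ^+ 2)); last first.
    by move=> i /andP[hi _]; rewrite ltnNge hi /= -lt0n (leq_trans h1 hi).
  rewrite !sumr_const_nat addnK -[d ^+ 2 *+ _]mulr_natr -[(_ - d) ^+ 2 *+ _]mulr_natr natrB // /d eM.
  rewrite natrD -/h.

  field.
  by apply/andP; split; apply/eqP; lra.
Qed.
End Q.

Theorem theorem8 (R : realType) (k n : nat) (eps : R) :
  (2 <= k)%N -> (1 <= n)%N -> 0 < eps -> eps < 1 ->
  C_rho (@qcheck R k) /\
  (forall q : 'I_(2 ^ k) -> R, C_rho q -> lambda n eps (@qcheck R k) <= lambda n eps q).
Proof.
case: k => [|m] // hk hn e0 e1.
have m0 : (0 < m)%N by [].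
have qC := qcheck_C R m0.
split => // q Cq.
have [s1q s2q] := Crho_sums Cq.
have [s1c s2c] := Crho_sums qC.
rewrite /lambda lerD2r; apply: ler_wpM2l.
  by apply: mulr_ge0; [apply: exprn_ge0; lra | rewrite invr_ge0 exprn_ge0].
rewrite lerD2l (Xi_eq (ltn0Sn m)) !big_imset; try exact: Hc_inj.
under eq_bigr => c _ do rewrite zeta_Hc.
under [X in _ <= X]eq_bigr => c _ do rewrite zeta_Hc.
case: Cq => q0 qge _ _.
case: (qC) => qc0 _ _ _.
apply: key_ineq => //.
- by apply: divr_gt0; lra.
- by rewrite ltr_pdivrMr; lra.
- by move=> c; apply: sumr_ge0 => i _.
- by move=> c; rewrite inE => c0; exact: zc_qcheck.
- by rewrite !sum_zc // s1q s1c.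
- by rewrite !sum_zc2 // s1q s1c s2q s2c.
Qed.
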